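(* Let $q>1$, $A>0$, $\alpha=q/(q-1)$, and $c(A,q)=\tfrac12\big(A(4q-2)/q\big)^q$. Let $V\ge0$ be a maximizer of $y_V(1)$ over non-negative $V\in L^q[0,1]$ with $\|V\|_{L^q}\le A$. Let $H$ and $\Psi$ be associated with $V$, that is: - $\Psi>0$ on $(0,1)$; - $\Psi''-|\Psi|^\alpha+2H=0$; - $\Psi(0)=\Psi(1)=0$; - $\Psi'(0)=H-c(A,q)$; - $V=\frac{q}{4q-2}\Psi^{1/(q-1)}$. Then $H\in(c(A,q),h(A,q))$, where $h(A,q)$ is as defined below.
   Context: For $V\in L^q[0,1]$, $y_V$ denotes the solution of $-y''+Vy=0$ on $[0,1]$ with $y(0)=0$, $y'(0)=1$. The number $h(A,q)$ is the unique $H>c(A,q)$ such that $(2H)^{1/\alpha}$ is a root of $f_H(x)=\frac{2}{\alpha+1}x|x|^\alpha-4Hx+(H-c(A,q))^2$. *)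

(* Defs.v *)
From Stdlib Require Import Reals Lra.
Open Scope R_scope.

(* Real power x^p for x >= 0 (with 0^p = 0, the right convention for p > 0). *)
Definition rpow (x p : R) : R := if Rlt_dec 0 x then Rpower x p else 0.

Definition in01 (x : R) : Prop := 0 <= x <= 1.

Definition cont01 (W : R -> R) : Prop :=
  forall x, in01 x -> forall eps, eps > 0 -> exists delta, delta > 0 /\
    forall t, in01 t -> Rabs (t - x) < delta -> Rabs (W t - W x) < eps.

Definition admissible (q A : R) (W : R -> R) : Prop :=
  cont01 W /\ (forall x, in01 x -> 0 <= W x) /\
  exists pr : Riemann_integrable (fun t => rpow (W t) q) 0 1,
    RiemannInt pr <= rpow A q.

Definition is_yV (W y : R -> R) : Prop :=
  exists dy d2y : R -> R,
    (forall x, in01 x ->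
       derivable_pt_lim y x (dy x) /\ derivable_pt_lim dy x (d2y x) /\
       - d2y x + W x * y x = 0) /\
    y 0 = 0 /\ dy 0 = 1.

Definition is_maximizer (q A : R) (V : R -> R) : Prop :=
  admissible q A V /\
  forall y, is_yV V y ->
  forall W z, admissible q A W -> is_yV W z -> z 1 <= y 1.

Definition alpha_of (q : R) : R := q / (q - 1).

Definition c_of (A q : R) : R := / 2 * rpow (A * (4 * q - 2) / q) q.

Definition f_H (A q H x : R) : R :=
  2 / (alpha_of q + 1) * x * rpow (Rabs x) (alpha_of q) - 4 * H * x
  + (H - c_of A q) ^ 2.

Definition is_h (A q H' : R) : Prop :=
  c_of A q < H' /\ f_H A q H' (rpow (2 * H') (/ alpha_of q)) = 0.

Definition associated (A q : R) (V : R -> R) (H : R) (Psi : R -> R) : Prop :=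
  exists dPsi d2Psi : R -> R,
    (forall x, 0 < x < 1 -> Psi x > 0) /\
    (forall x, in01 x ->
       derivable_pt_lim Psi x (dPsi x) /\ derivable_pt_lim dPsi x (d2Psi x) /\
       d2Psi x - rpow (Rabs (Psi x)) (alpha_of q) + 2 * H = 0) /\
    Psi 0 = 0 /\ Psi 1 = 0 /\
    dPsi 0 = H - c_of A q /\
    (forall x, in01 x -> V x = q / (4 * q - 2) * rpow (Psi x) (/ (q - 1))).

(* Main.v *)
Require Import Defs.
From Stdlib Require Import Reals Lra Psatz.
Open Scope R_scope.

Lemma Rpower_pos x y : 0 < Rpower x y.
Proof. unfold Rpower; apply exp_pos. Qed.

Lemma rpow_pos_eq x p : 0 < x -> rpow x p = Rpower x p.
Proof. intros; unfold rpow; destruct (Rlt_dec 0 x); [reflexivity|lra]. Qed.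

Lemma rpow_nonpos x p : x <= 0 -> rpow x p = 0.
Proof. intros; unfold rpow; destruct (Rlt_dec 0 x); [lra|reflexivity]. Qed.

Lemma deriv_max0 f a b m l : derivable_pt_lim f m l -> a < m < b ->
  (forall x, a < x < b -> f x <= f m) -> l = 0.
Proof.
  intros Hd Hm Hmax.
  assert (pr : derivable_pt f m) by (exists l; exact Hd).
  pose proof (deriv_maximum f a b m (exist _ l Hd) (proj1 Hm) (proj2 Hm)
    (fun x h1 h2 => Hmax x (conj h1 h2))) as E. exact E.
Qed.

Lemma dlim_loc f g x l d : 0 < d -> (forall y, Rabs (y - x) < d -> f y = g y) ->
  derivable_pt_lim g x l -> derivable_pt_lim f x l.
Proof.
  intros Hd Heq Hg eps Heps.
  destruct (Hg eps Heps) as [del Hdel].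
  assert (Hm : 0 < Rmin del d) by (apply Rmin_pos; [apply del|lra]).
  exists (mkposreal _ Hm). intros h Hh0 Hh. simpl in Hh.
  rewrite (Heq (x+h)), (Heq x).
  - apply Hdel; auto. apply Rlt_le_trans with (1:=Hh), Rmin_l.
  - rewrite Rminus_diag, Rabs_R0; lra.
  - replace (x+h-x) with h by ring. apply Rlt_le_trans with (1:=Hh), Rmin_r.
Qed.

Lemma Rpower_lt1 x e : 0 < x < 1 -> 0 < e -> Rpower x e < 1.
Proof.
  intros Hx He. unfold Rpower. rewrite <- exp_0. apply exp_increasing.
  assert (ln x < 0) by (rewrite <- ln_1; apply ln_increasing; lra). nra.
Qed.

Lemma Rpower_gt1 x e : 1 < x -> 0 < e -> 1 < Rpower x e.
Proof.
  intros Hx He. unfold Rpower. rewrite <- exp_0. apply exp_increasing.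
  assert (0 < ln x) by (rewrite <- ln_1; apply ln_increasing; lra). nra.
Qed.

Lemma Rpower_le_self x e : 0 < x < 1 -> 1 < e -> Rpower x e <= x.
Proof.
  intros Hx He. unfold Rpower. rewrite <- (exp_ln x) at 2 by lra.
  assert (ln x < 0) by (rewrite <- ln_1; apply ln_increasing; lra).
  left; apply exp_increasing. nra.
Qed.

Lemma bernoulli g t : 1 < g -> 0 < t -> t <> 1 -> 1 + g * (t - 1) < Rpower t g.
Proof.
  intros Hg Ht Ht1.
  set (rho := fun s => Rpower s g - 1 - g * (s - 1)).
  set (rho' := fun s => g * Rpower s (g - 1) - g).
  assert (Hd : forall s, 0 < s -> derivable_pt_lim rho s (rho' s)).
  { intros s Hs. unfold rho, rho'.
    replace (g * Rpower s (g - 1) - g) with (g * Rpower s (g - 1) - 0 - g * (1 - 0)) by ring.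
    apply derivable_pt_lim_minus. apply derivable_pt_lim_minus.
    apply derivable_pt_lim_power; auto. apply derivable_pt_lim_const.
    apply derivable_pt_lim_scal. apply derivable_pt_lim_minus.
    apply derivable_pt_lim_id. apply derivable_pt_lim_const. }
  assert (H1 : rho 1 = 0) by (unfold rho, Rpower; rewrite ln_1, Rmult_0_r, exp_0; ring).
  cut (0 < rho t). { unfold rho; lra. }
  destruct (Rlt_dec t 1) as [Hlt|Hge].
  - destruct (MVT_cor2 rho rho' t 1 Hlt (fun c Hc => Hd c (Rlt_le_trans _ _ _ Ht (proj1 Hc)))) as [c [Hc1 Hc2]].
    unfold rho' in Hc1. assert (Rpower c (g - 1) < 1) by (apply Rpower_lt1; lra).
    rewrite H1 in Hc1.
    assert (0 < g * (1 - Rpower c (g - 1)) * (1 - t)) by (repeat apply Rmult_lt_0_compat; lra).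
    lra.
  - assert (Hlt : 1 < t) by lra.
    destruct (MVT_cor2 rho rho' 1 t Hlt (fun c Hc => Hd c (Rlt_le_trans _ _ _ Rlt_0_1 (proj1 Hc)))) as [c [Hc1 Hc2]].
    unfold rho' in Hc1. assert (1 < Rpower c (g - 1)) by (apply Rpower_gt1; lra).
    rewrite H1 in Hc1.
    assert (0 < g * (Rpower c (g - 1) - 1) * (t - 1)) by (repeat apply Rmult_lt_0_compat; lra).
    lra.
Qed.

Lemma bernoulli_le g t : 1 < g -> 0 < t -> 1 + g * (t - 1) <= Rpower t g.
Proof.
  intros. destruct (Req_dec t 1). subst. unfold Rpower; rewrite ln_1, Rmult_0_r, exp_0. lra.
  left; apply bernoulli; auto.
Qed.

Lemma phi_upper a t : 1 < a -> 0 < t <= 1 ->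
  Rpower t (a+1) - 1 - (a+1) * (t - 1) <= (a+1) * a * (1 - t)^2.
Proof.
  intros Ha Ht.
  destruct (Req_dec t 1) as [E|Hne].
  { subst. unfold Rpower; rewrite ln_1, Rmult_0_r, exp_0. nra. }
  set (rho := fun s => Rpower s (a+1) - 1 - (a+1) * (s - 1)).
  set (rho' := fun s => (a+1) * Rpower s a - (a+1)).
  assert (Hd : forall s, 0 < s -> derivable_pt_lim rho s (rho' s)).
  { intros s Hs. unfold rho, rho'.
    replace ((a+1) * Rpower s a - (a+1)) with ((a+1) * Rpower s (a+1 - 1) - 0 - (a+1) * (1 - 0)) by (replace (a+1-1) with a by ring; ring).
    apply derivable_pt_lim_minus. apply derivable_pt_lim_minus.
    apply derivable_pt_lim_power; auto. apply derivable_pt_lim_const.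
    apply derivable_pt_lim_scal. apply derivable_pt_lim_minus.
    apply derivable_pt_lim_id. apply derivable_pt_lim_const. }
  assert (H1 : rho 1 = 0) by (unfold rho, Rpower; rewrite ln_1, Rmult_0_r, exp_0; ring).
  assert (Htl : t < 1) by lra.
  destruct (MVT_cor2 rho rho' t 1 Htl (fun c Hc => Hd c (Rlt_le_trans _ _ _ (proj1 Ht) (proj1 Hc)))) as [c [Hc1 Hc2]].
  unfold rho' in Hc1. rewrite H1 in Hc1.
  pose proof (bernoulli_le a c Ha ltac:(lra)).
  change (rho t <= (a+1) * a * (1 - t)^2).
  assert (E : rho t = (a+1) * (1 - Rpower c a) * (1 - t)) by lra. rewrite E.
  assert (1 - Rpower c a <= a * (1 - t)) by nra.
  assert (0 <= 1 - t) by lra.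
  apply Rle_trans with ((a+1) * (a * (1 - t)) * (1 - t)).
  apply Rmult_le_compat_r; auto. apply Rmult_le_compat_l; lra. nra.
Qed.
Lemma fH_pos A q H x : 0 < x -> f_H A q H x =
  2 / (alpha_of q + 1) * Rpower x (alpha_of q + 1) - 4 * H * x + (H - c_of A q)^2.
Proof.
  intros Hx. unfold f_H. rewrite Rabs_right by lra. rewrite rpow_pos_eq by lra.
  rewrite Rpower_plus, Rpower_1 by lra. ring.
Qed.

Lemma fH_deriv A q H s : 1 < alpha_of q -> 0 <= s ->
  derivable_pt_lim (f_H A q H) s (2 * rpow (Rabs s) (alpha_of q) - 4 * H).
Proof.
  intros Ha Hs. set (a := alpha_of q) in *.
  destruct Hs as [Hs|Hs].
  - apply dlim_loc with (g := fun x => 2 / (a + 1) * Rpower x (a + 1) - 4 * H * x + (H - c_of A q)^2) (d := s); auto.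
    { intros y Hy. apply fH_pos. apply Rabs_def2 in Hy. lra. }
    rewrite Rabs_right, rpow_pos_eq by lra.
    replace (2 * Rpower s a - 4 * H) with (2 / (a+1) * ((a+1) * Rpower s (a + 1 - 1)) - 4 * H * 1 + 0).
    2:{ replace (a+1-1) with a by ring. field. lra. }
    apply derivable_pt_lim_plus. apply derivable_pt_lim_minus.
    apply derivable_pt_lim_scal. apply derivable_pt_lim_power; auto.
    apply derivable_pt_lim_scal. apply derivable_pt_lim_id. apply derivable_pt_lim_const.
  - subst s. intros eps Heps.
    assert (Hm : 0 < Rmin 1 eps) by (apply Rmin_pos; lra).
    exists (mkposreal _ Hm). intros h Hh0 Hh. simpl in Hh.
    assert (Hh1 : Rabs h < 1) by (apply Rlt_le_trans with (1:=Hh), Rmin_l).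
    assert (Hh2 : Rabs h < eps) by (apply Rlt_le_trans with (1:=Hh), Rmin_r).
    rewrite Rplus_0_l. rewrite Rabs_R0, (rpow_nonpos 0) by lra.
    unfold f_H. rewrite Rabs_R0, (rpow_nonpos 0) by lra.
    assert (Hp : 0 < Rabs h) by (apply Rabs_pos_lt; auto).
    rewrite rpow_pos_eq by lra. fold a.
    pose proof (Rpower_le_self (Rabs h) a ltac:(lra) Ha) as Hle.
    pose proof (Rpower_pos (Rabs h) a) as Hpos.
    replace ((2 / (a + 1) * h * Rpower (Rabs h) a - 4 * H * h + (H - c_of A q) ^ 2 -
      (2 / (a + 1) * 0 * 0 - 4 * H * 0 + (H - c_of A q) ^ 2)) / h - (2 * 0 - 4 * H))
      with (2 / (a + 1) * Rpower (Rabs h) a) by (field; split; lra).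
    rewrite Rabs_right.
    2:{ apply Rle_ge, Rmult_le_pos; [apply Rlt_le, Rdiv_lt_0_compat|]; lra. }
    assert (2 / (a+1) < 1) by (apply (Rmult_lt_reg_r (a+1)); [lra|]; unfold Rdiv; rewrite Rmult_assoc, Rinv_l; lra).
    nra.
Qed.
Definition gt (A q h : R) : R :=
  (h - c_of A q)^2 - 4 * alpha_of q / (alpha_of q + 1) * h * Rpower (2 * h) (/ alpha_of q).

Lemma g_eq A q h : 1 < alpha_of q -> 0 < h ->
  f_H A q h (rpow (2 * h) (/ alpha_of q)) = gt A q h.
Proof.
  intros Ha Hh. set (a := alpha_of q) in *.
  rewrite rpow_pos_eq by lra.
  assert (Hx : 0 < Rpower (2*h) (/a)) by apply Rpower_pos.
  unfold f_H, gt. fold a. rewrite Rabs_right by lra. rewrite rpow_pos_eq by lra.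
  rewrite Rpower_mult, Rinv_l, Rpower_1 by lra. field. lra.
Qed.

Lemma gt_mono A q u v : 1 < alpha_of q -> 0 <= c_of A q -> c_of A q < u -> u < v ->
  0 <= gt A q u -> 0 < gt A q v.
Proof.
  intros Ha Hc Hu Huv Hg. unfold gt in *. set (a := alpha_of q) in *. set (c := c_of A q) in *.
  set (gam := (1 + / a) / 2).
  assert (Hia : 0 < / a < 1).
  { split. apply Rinv_0_lt_compat; lra. rewrite <- Rinv_1. apply Rinv_lt_contravar; lra. }
  assert (Hgam : 0 < gam < 1) by (unfold gam; lra).
  set (R2 := Rpower 2 (/a)).
  assert (HR2 : 0 < R2) by apply Rpower_pos.
  assert (Hdec : forall h, 0 < h -> h = Rpower h (1 - gam) * Rpower h gam /\
     h * Rpower (2 * h) (/a) = R2 * (Rpower h gam * Rpower h gam)).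
  { intros h Hh. split.
    - rewrite <- Rpower_plus. replace (1 - gam + gam) with 1 by ring. rewrite Rpower_1; lra.
    - rewrite <- Rpower_plus. replace (gam + gam) with (1 + /a) by (unfold gam; field; lra).
      rewrite Rpower_plus, Rpower_1 by lra. unfold R2. rewrite <- Rpower_mult_distr by lra. ring. }
  destruct (Hdec u ltac:(lra)) as [Eu1 Eu2]. destruct (Hdec v ltac:(lra)) as [Ev1 Ev2].
  rewrite Rmult_assoc in Hg |- *. rewrite Eu2 in Hg. rewrite Ev2.
  set (D := 4 * a / (a + 1)).
  assert (HD : 0 < D) by (unfold D; apply Rdiv_lt_0_compat; lra).
  set (Pu := Rpower u gam) in *. set (Pv := Rpower v gam) in *.
  set (Qu := Rpower u (1 - gam)) in *. set (Qv := Rpower v (1 - gam)) in *.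
  assert (HPu : 0 < Pu) by apply Rpower_pos.
  assert (HPv : 0 < Pv) by apply Rpower_pos.
  assert (HPuv : Pu < Pv) by (apply Rlt_Rpower_l; lra).
  assert (HQuv : Qu < Qv) by (apply Rlt_Rpower_l; lra).
  set (ru := Qu - c / Pu). set (rv := Qv - c / Pv).
  assert (Eu : u - c = Pu * ru) by (unfold ru; rewrite Eu1 at 1; fold Qu Pu; field; lra).
  assert (Ev : v - c = Pv * rv) by (unfold rv; rewrite Ev1 at 1; fold Qv Pv; field; lra).
  assert (Hru : 0 < ru).
  { apply (Rmult_lt_reg_l Pu); auto. rewrite <- Eu. lra. }
  assert (Hrv : ru < rv).
  { unfold ru, rv. assert (c / Pv <= c / Pu).
    { unfold Rdiv. apply Rmult_le_compat_l; auto. apply Rinv_le_contravar; lra. } lra. }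
  rewrite Eu in Hg. rewrite Ev.
  assert (HDR : 0 < D * R2) by nra.
  assert (E1 : (Pu * ru) ^ 2 - D * (R2 * (Pu * Pu)) = (Pu * Pu) * (ru^2 - D * R2)) by ring.
  assert (E2 : (Pv * rv) ^ 2 - D * (R2 * (Pv * Pv)) = (Pv * Pv) * (rv^2 - D * R2)) by ring.
  fold D in Hg. fold D. rewrite E1 in Hg. rewrite E2.
  assert (HPP : 0 < Pu * Pu) by nra.
  assert (D * R2 <= ru^2).
  { assert (0 <= ru^2 - D * R2); [|lra].
    apply (Rmult_le_reg_l (Pu*Pu)); auto. lra. }
  assert (ru ^2 < rv^2) by nra.
  assert (0 < Pv * Pv) by nra.
  apply Rmult_lt_0_compat; lra.
Qed.
Lemma cid x : continuity_pt (fun y => y) x.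
Proof. apply derivable_continuous_pt, derivable_pt_id. Qed.

Lemma gt_cont A q h : 0 < h -> continuity_pt (gt A q) h.
Proof.
  intros Hh. unfold gt.
  set (a := alpha_of q). set (c := c_of A q).
  assert (C1 : continuity_pt (fun y => Rpower (2 * y) (/ a)) h).
  { apply (continuity_pt_comp (fun y => 2 * y) (fun y => Rpower y (/ a))).
    - apply continuity_pt_scal, cid.
    - apply derivable_continuous_pt. exists (/ a * Rpower (2 * h) (/ a - 1)).
      apply derivable_pt_lim_power. lra. }
  assert (C2 : continuity_pt (fun y => y - c) h).
  { apply (continuity_pt_minus (fun y => y) (fun _ => c)). apply cid. apply continuity_pt_const. intros ? ?; reflexivity. }
  apply (continuity_pt_minus (fun y => (y - c)^2) (fun y => 4 * a / (a + 1) * y * Rpower (2 * y) (/ a))).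
  - change (continuity_pt (fun y => (y - c) * ((y - c) * 1)) h).
    apply (continuity_pt_mult (fun y => y - c) (fun y => (y - c) * 1)); auto.
    apply (continuity_pt_mult (fun y => y - c) (fun y => 1)); auto. apply continuity_pt_const. intros ? ?; reflexivity.
  - apply (continuity_pt_mult (fun y => 4 * a / (a + 1) * y) (fun y => Rpower (2 * y) (/ a))); auto.
    apply continuity_pt_scal, cid.
Qed.
Lemma gt_c_neg A q : 1 < alpha_of q -> 0 < c_of A q -> gt A q (c_of A q) < 0.
Proof.
  intros Ha Hc. unfold gt. set (a := alpha_of q) in *.
  pose proof (Rpower_pos (2 * c_of A q) (/a)).
  assert (0 < 4 * a / (a + 1)) by (apply Rdiv_lt_0_compat; lra).
  replace ((c_of A q - c_of A q) ^ 2) with 0 by ring.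
  assert (0 < 4 * a / (a + 1) * c_of A q * Rpower (2 * c_of A q) (/ a)) by (apply Rmult_lt_0_compat; [apply Rmult_lt_0_compat|]; auto).
  lra.
Qed.

Lemma h_exists A q : 1 < alpha_of q -> 0 < c_of A q -> exists z, c_of A q < z /\ gt A q z = 0.
Proof.
  intros Ha Hc. set (a := alpha_of q) in *. set (c := c_of A q) in *.
  set (k := 4 * a / (a + 1)).
  assert (Hk : 0 < k) by (unfold k; apply Rdiv_lt_0_compat; lra).
  set (x := Rmax (c + 1) (Rpower (2 * k + 4) (/ (a - 1)))).
  assert (Hx1 : c + 1 <= x) by apply Rmax_l.
  assert (Hx2 : Rpower (2 * k + 4) (/ (a - 1)) <= x) by apply Rmax_r.
  set (L := Rpower x (a - 1)).
  assert (HL : 2 * k + 4 <= L).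
  { unfold L. replace (2 * k + 4) with (Rpower (Rpower (2 * k + 4) (/ (a - 1))) (a - 1)).
    apply Rle_Rpower_l. lra. split; auto. apply Rpower_pos.
    rewrite Rpower_mult, Rinv_l, Rpower_1; lra. }
  assert (HxL : Rpower x a = x * L).
  { unfold L. rewrite <- (Rpower_1 x) at 2 by lra. rewrite <- Rpower_plus. f_equal; ring. }
  set (B := Rpower x a / 2).
  assert (HB2 : Rpower (2 * B) (/ a) = x).
  { unfold B. replace (2 * (Rpower x a / 2)) with (Rpower x a) by field.
    rewrite Rpower_mult, Rinv_r, Rpower_1; lra. }
  assert (HBc : c < B).
  { unfold B. rewrite HxL. nra. }
  assert (HgB : 0 < gt A q B).
  { unfold gt. fold a c. rewrite HB2. fold k. unfold B. rewrite HxL.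
    assert (0 < x * L * (x - c)) by (repeat apply Rmult_lt_0_compat; nra).
    assert (0 <= x * x * L * (L / 4 - k / 2 - 1)) by (repeat apply Rmult_le_pos; nra).
    nra. }
  destruct (Ranalysis5.IVT_interv (gt A q) c B (fun y Hy => gt_cont A q y ltac:(lra)) HBc
     (gt_c_neg A q Ha Hc) HgB) as [z [Hz1 Hz2]].
  exists z. split; auto. destruct (proj1 Hz1); auto. subst z.
  pose proof (gt_c_neg A q Ha Hc). fold c in H. lra.
Qed.
Theorem mainTheorem17 (q A : R) (V : R -> R) (H : R) (Psi : R -> R) :
  1 < q -> 0 < A ->
  is_maximizer q A V ->
  associated A q V H Psi ->
  c_of A q < H /\
  exists h, is_h A q h /\ (forall h', is_h A q h' -> h' = h) /\ H < h.
Proof.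
  intros Hq HA _ Hassoc.
  destruct Hassoc as [dPsi [d2Psi [Hpos [Hode [HP0 [HP1 [Hd0 _]]]]]]].
  assert (Ha : 1 < alpha_of q).
  { unfold alpha_of. apply (Rmult_lt_reg_r (q - 1)); [lra|].
    unfold Rdiv. rewrite Rmult_assoc, Rinv_l; lra. }
  assert (Hc : 0 < c_of A q).
  { unfold c_of. rewrite rpow_pos_eq. apply Rmult_lt_0_compat; [lra|apply Rpower_pos].
    apply Rdiv_lt_0_compat; [apply Rmult_lt_0_compat|]; lra. }
  set (a := alpha_of q) in *. set (c := c_of A q) in *.
  assert (Hnn : forall x, in01 x -> 0 <= Psi x).
  { intros x [Hx1 Hx2]. destruct Hx1 as [Hx1| <-]; [|rewrite HP0; lra].
    destruct Hx2 as [Hx2| ->]; [|rewrite HP1; lra]. left; apply Hpos; lra. }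
  assert (HdP : forall x, in01 x -> derivable_pt_lim Psi x (dPsi x)) by (intros x Hx; apply (Hode x Hx)).
  assert (Hdd : forall x, in01 x -> derivable_pt_lim dPsi x (d2Psi x)) by (intros x Hx; apply (Hode x Hx)).
  assert (Heq : forall x, in01 x -> d2Psi x - rpow (Rabs (Psi x)) a + 2 * H = 0) by (intros x Hx; apply (Hode x Hx)).
  assert (HcH : c < H).
  { destruct (Rlt_le_dec c H) as [|Hle]; auto. exfalso.
    destruct Hle as [Hlt|Heq'].
    - destruct (HdP 0 ltac:(unfold in01; lra) (c - H) ltac:(lra)) as [del Hdel].
      set (t := Rmin (del / 2) (1 / 2)).
      assert (Ht : 0 < t) by (apply Rmin_pos; [pose proof (cond_pos del)|]; lra).
      assert (Ht2 : t <= del / 2) by apply Rmin_l. assert (Ht3 : t <= 1/2) by apply Rmin_r.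
      pose proof (cond_pos del).
      specialize (Hdel t ltac:(lra) ltac:(rewrite Rabs_right; lra)).
      rewrite Rplus_0_l, HP0, Hd0 in Hdel.
      assert (Hpt : Psi t > 0) by (apply Hpos; lra).
      apply Rabs_def2 in Hdel. destruct Hdel as [Hdel _].
      assert (0 < (Psi t - 0) / t) by (apply Rdiv_lt_0_compat; lra). fold c in Hdel. lra.
    - assert (Hd2 : d2Psi 0 = - 2 * H).
      { pose proof (Heq 0 ltac:(unfold in01; lra)). rewrite HP0, Rabs_R0, rpow_nonpos in H0 by lra. lra. }
      destruct (Hdd 0 ltac:(unfold in01; lra) (2 * c) ltac:(lra)) as [del Hdel].
      set (t := Rmin (del / 2) (1 / 2)).
      pose proof (cond_pos del).
      assert (Ht : 0 < t) by (apply Rmin_pos; lra).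
      assert (Ht2 : t <= del / 2) by apply Rmin_l. assert (Ht3 : t <= 1/2) by apply Rmin_r.
      destruct (MVT_cor2 Psi dPsi 0 t Ht (fun y Hy => HdP y ltac:(unfold in01; lra))) as [xi [Hxi1 Hxi2]].
      specialize (Hdel xi ltac:(lra) ltac:(rewrite Rabs_right; lra)).
      rewrite Rplus_0_l, Hd2, Hd0 in Hdel. fold c in Hdel.
      apply Rabs_def2 in Hdel. destruct Hdel as [Hdel _].
      replace ((dPsi xi - (H - c)) / xi - -2 * H) with (dPsi xi / xi + 2 * H) in Hdel
        by (rewrite <- Heq'; field; lra).
      assert (dPsi xi < 0).
      { destruct (Rlt_le_dec (dPsi xi) 0); auto.
        assert (0 <= dPsi xi / xi) by (apply Rmult_le_pos; [lra|left; apply Rinv_0_lt_compat; lra]). lra. }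
      assert (Hpt : Psi t > 0) by (apply Hpos; lra).
      rewrite HP0 in Hxi1. nra. }
  assert (HH : 0 < H) by lra.
  assert (Hen : forall x, in01 x -> dPsi x ^ 2 = f_H A q H (Psi x)).
  { assert (HE : forall x, in01 x ->
      derivable_pt_lim (fun t => dPsi t * dPsi t - f_H A q H (Psi t)) x 0).
    { intros x Hx.
      replace 0 with (d2Psi x * dPsi x + dPsi x * d2Psi x - (2 * rpow (Rabs (Psi x)) a - 4 * H) * dPsi x).
      2:{ pose proof (Heq x Hx). nra. }
      apply (derivable_pt_lim_minus (fun t => dPsi t * dPsi t) (fun t => f_H A q H (Psi t))).
      apply (derivable_pt_lim_mult dPsi dPsi); apply Hdd; auto.
      apply (derivable_pt_lim_comp Psi (f_H A q H)). apply HdP; auto.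
      apply fH_deriv; auto. }
    intros x Hx. destruct (proj1 Hx) as [Hx0| <-].
    - destruct (MVT_cor2 (fun t => dPsi t * dPsi t - f_H A q H (Psi t)) (fun _ => 0) 0 x Hx0
        (fun y Hy => HE y ltac:(unfold in01 in *; lra))) as [xi [Hxi _]].
      rewrite HP0, Hd0 in Hxi. unfold f_H at 2 in Hxi. fold c in Hxi. simpl. nra.
    - rewrite HP0, Hd0. unfold f_H. fold c. ring. }
  destruct (continuity_ab_maj Psi 0 1 ltac:(lra)
     (fun y Hy => derivable_continuous_pt Psi y (exist _ (dPsi y) (HdP y Hy)))) as [m [Hm1 Hm2]].
  set (M := Psi m).
  assert (HMpos : 0 < M).
  { pose proof (Hpos (1/2) ltac:(lra)). pose proof (Hm1 (1/2) ltac:(lra)). unfold M; lra. }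
  assert (Hm01 : 0 < m < 1).
  { split; destruct (Rle_lt_or_eq_dec _ _ (proj1 Hm2)), (Rle_lt_or_eq_dec _ _ (proj2 Hm2)); subst; unfold M in HMpos; try lra;
      rewrite ?HP0, ?HP1 in HMpos; lra. }
  assert (HdM : dPsi m = 0).
  { apply (deriv_max0 Psi 0 1 m (dPsi m)).
    - apply HdP. unfold in01; lra.
    - exact Hm01.
    - intros y Hy. apply Hm1. lra. }
  assert (HfM : f_H A q H M = 0).
  { unfold M. rewrite <- Hen by (unfold in01; lra). rewrite HdM. ring. }
  set (x0 := Rpower (2 * H) (/ a)).
  assert (Hx0 : 0 < x0) by apply Rpower_pos.
  assert (Hx0a : Rpower x0 a = 2 * H).
  { unfold x0. rewrite Rpower_mult, Rinv_l, Rpower_1; lra. }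
  assert (Hx0b : Rpower x0 (a + 1) = 2 * H * x0).
  { rewrite Rpower_plus, Hx0a, Rpower_1; lra. }
  assert (Hrep : forall x, 0 < x -> f_H A q H x - f_H A q H x0 =
     4 * H * x0 / (a + 1) * (Rpower (x / x0) (a + 1) - 1 - (a + 1) * (x / x0 - 1))).
  { intros x Hx. rewrite !fH_pos by lra. fold a c.
    replace (Rpower x (a + 1)) with (Rpower x0 (a + 1) * Rpower (x / x0) (a + 1)).
    2:{ rewrite Rpower_mult_distr. f_equal. field. lra. lra. apply Rdiv_lt_0_compat; lra. }
    rewrite Hx0b. field. split; lra. }
  assert (HgH : gt A q H < 0).
  { rewrite <- g_eq by auto. fold a. rewrite rpow_pos_eq by lra. fold x0.
    destruct (Req_dec M x0) as [HMx|HMx].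
    2:{ pose proof (Hrep M HMpos) as E. rewrite HfM in E.
        assert (Hne : M / x0 <> 1).
        { intro E1. apply HMx. apply (Rmult_eq_reg_r (/ x0)). rewrite Rinv_r by lra. exact E1.
          apply Rinv_neq_0_compat; lra. }
        pose proof (bernoulli (a + 1) (M / x0) ltac:(lra) ltac:(apply Rdiv_lt_0_compat; lra) Hne).
        assert (0 < 4 * H * x0 / (a + 1)) by (apply Rdiv_lt_0_compat; [|lra]; nra).
        nra. }
    exfalso.
    assert (Hf0 : f_H A q H x0 = 0) by (rewrite <- HMx; exact HfM).
    set (K := 4 * H * a / x0).
    assert (HK : 0 < K) by (unfold K; apply Rdiv_lt_0_compat; nra).
    assert (Hbound : forall x, 0 <= x <= x0 -> f_H A q H x <= K * (x0 - x) ^ 2).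
    { intros x [Hxa Hxb]. destruct Hxa as [Hxa| <-].
      - pose proof (Hrep x Hxa) as E. rewrite Hf0 in E.
        pose proof (phi_upper a (x / x0) Ha ltac:(split; [apply Rdiv_lt_0_compat; lra|
            apply (Rmult_le_reg_r x0); [lra|]; unfold Rdiv; rewrite Rmult_assoc, Rinv_l; lra])).
        assert (0 < 4 * H * x0 / (a + 1)) by (apply Rdiv_lt_0_compat; [|lra]; nra).
        assert (E2 : 4 * H * x0 / (a + 1) * ((a + 1) * a * (1 - x / x0) ^ 2) = K * (x0 - x) ^ 2)
          by (unfold K; field; lra).
        rewrite <- E2. 
        apply Rle_trans with (4 * H * x0 / (a + 1) * (Rpower (x / x0) (a + 1) - 1 - (a + 1) * (x / x0 - 1))).
        lra. apply Rmult_le_compat_l; lra.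
      - rewrite fH_pos in Hf0 by lra. fold a c in Hf0. rewrite Hx0b in Hf0.
        unfold f_H. fold c. rewrite Rmult_0_r, Rmult_0_l, Rmult_0_r. 
        assert (E3 : (H - c) ^ 2 = 4 * H * x0 * a / (a + 1)) by (replace (4*H*x0*a/(a+1)) with (4*H*x0 - 2/(a+1)*(2*H*x0)) by (field; lra); lra).
        rewrite E3. unfold K. replace ((4 * H * a / x0) * (x0 - 0) ^ 2) with (4 * H * x0 * a) by (field; lra).
        assert (0 < 4 * H * x0 * a) by (apply Rmult_lt_0_compat; [apply Rmult_lt_0_compat; [apply Rmult_lt_0_compat|]|]; lra).
        assert (4 * H * x0 * a / (a + 1) <= 4 * H * x0 * a * 1).
        { unfold Rdiv. apply Rmult_le_compat_l. lra. rewrite <- Rinv_1. apply Rinv_le_contravar; lra. }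
        lra. }
    set (C := K + 1).
    set (w := fun s => (x0 - Psi s) * exp (C * s)).
    set (w' := fun s => - dPsi s * exp (C * s) + (x0 - Psi s) * (exp (C * s) * (C * 1))).
    assert (Hw : forall s, 0 <= s <= m -> derivable_pt_lim w s (w' s)).
    { intros s Hs. unfold w, w'.
      apply (derivable_pt_lim_mult (fun s => x0 - Psi s) (fun s => exp (C * s))).
      replace (- dPsi s) with (0 - dPsi s) by ring.
      apply (derivable_pt_lim_minus (fun _ => x0) Psi). apply derivable_pt_lim_const.
      apply HdP. unfold in01; lra.
      apply (derivable_pt_lim_comp (fun s => C * s) exp).
      apply derivable_pt_lim_scal, derivable_pt_lim_id. apply derivable_pt_lim_exp. }
    destruct (MVT_cor2 w w' 0 m (proj1 Hm01) Hw) as [xi [Hxi1 Hxi2]].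
    unfold w, w' in Hxi1. rewrite HP0 in Hxi1. fold M in Hxi1. rewrite HMx in Hxi1.
    rewrite Rmult_0_r, exp_0 in Hxi1.
    assert (Hin : in01 xi) by (unfold in01; lra).
    pose proof (Hnn xi Hin) as Hn1.
    assert (Hn2 : Psi xi <= x0) by (rewrite <- HMx; apply Hm1; lra).
    pose proof (Hbound (Psi xi) (conj Hn1 Hn2)) as Hb. rewrite <- Hen in Hb by auto.
    assert (HdC : dPsi xi <= C * (x0 - Psi xi)).
    { destruct (Rle_lt_dec (dPsi xi) (C * (x0 - Psi xi))) as [|Hlt]; auto.
      assert (K * (x0 - Psi xi)^2 <= C * C * (x0 - Psi xi)^2).
      { apply Rmult_le_compat_r. nra. unfold C; nra. }
      assert (0 <= C * (x0 - Psi xi)) by (unfold C; nra).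
      nra. }
    pose proof (exp_pos (C * xi)).
    assert (0 <= - dPsi xi * exp (C * xi) + (x0 - Psi xi) * (exp (C * xi) * (C * 1))) by nra.
    nra. }
  destruct (h_exists A q Ha Hc) as [z [Hz1 Hz2]]. fold c in Hz1.
  split; auto.
  exists z. split; [|split].
  - split; auto. rewrite g_eq by (auto; lra). auto.
  - intros h' [Hh1 Hh2]. fold c in Hh1. rewrite g_eq in Hh2 by (auto; lra).
    destruct (Rtotal_order h' z) as [Hlt|[Heq2|Hgt]]; auto.
    + pose proof (gt_mono A q h' z Ha (Rlt_le _ _ Hc) Hh1 Hlt ltac:(lra)). lra.
    + pose proof (gt_mono A q z h' Ha (Rlt_le _ _ Hc) Hz1 Hgt ltac:(lra)). lra.
  - destruct (Rtotal_order H z) as [Hlt|[Heq2|Hgt]]; auto.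
    + subst. lra.
    + pose proof (gt_mono A q z H Ha (Rlt_le _ _ Hc) Hz1 Hgt ltac:(lra)). lra.
Qed.
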